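(* Suppose $\sigma$ is not surjective and $f\in D[t;\sigma]$ is monic of degree $m\ge2$ and irreducible. Then $S_f$ has no zero divisors and is a right division algebra but not a left division algebra. In particular, $S_f$ is an infinite-dimensional $S_0$-algebra.
   Context: $D$ is an associative division ring and $\sigma$ a ring endomorphism of $D$. $D[t;\sigma]$ is the skew polynomial ring with $ta=\sigma(a)t$. For monic $f$ of degree $m$, $S_f$ is the set of polynomials of degree $<m$ with multiplication $g\circ h=$ remainder of $gh$ upon right division by $f$. $S_0=\{a\in D: a\circ h=h\circ a \text{ for all } h\in S_f\}$, a commutative ring over which $S_f$ is an algebra. $f$ is irreducible if it is not a unit and has no factorization $f=gh$ with $\deg g,\deg h<\deg f$. $S_f$ is a right (resp. left) division algebra if $R_a(x)=x\circ a$ (resp. $L_a(x)=a\circ x$) is bijective for all nonzero $a$. *)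

(* Defs.v *)
From HB Require Import structures.
From mathcomp Require Import all_boot all_order all_algebra.
Set Implicit Arguments. Unset Strict Implicit. Unset Printing Implicit Defensive.
Import GRing.Theory.
Local Open Scope ring_scope.

(* Skew polynomials D[t;sigma] are represented by their coefficient
   sequences, i.e. elements of {poly D} (only the additive structure and the
   coefficient/size/lead_coef functions of {poly D} are used); the product is
   the skew product  (a t^i)(b t^j) = a sigma^i(b) t^(i+j). *)

Section Skew.
Variable D : unitRingType.
Variable sigma : {rmorphism D -> D}.

Definition skmul (g h : {poly D}) : {poly D} :=
  \poly_(k < (size g + size h).-1)
     \sum_(i < k.+1) g`_i * iter i (fun x => sigma x) h`_(k - i).

Definition skmonom (c : D) (k : nat) : {poly D} := c *: 'X^k.

(* remainder of g upon right division by (monic) f: repeatedly subtract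
   (lead g) t^(deg g - deg f) f; fuel n bounds the number of steps *)
Fixpoint skrem_fuel (f : {poly D}) (n : nat) (g : {poly D}) : {poly D} :=
  match n with
  | 0 => g
  | n'.+1 =>
      if (size g < size f)%N then g
      else skrem_fuel f n'
             (g - skmul (skmonom (lead_coef g) (size g - size f)%N) f)
  end.

Definition skrem (f g : {poly D}) : {poly D} := skrem_fuel f (size g) g.

Definition sfmul (f g h : {poly D}) : {poly D} := skrem f (skmul g h).

Definition inSf (f g : {poly D}) : Prop := (size g < size f)%N.

Definition inS0 (f : {poly D}) (a : D) : Prop :=
  forall h, inSf f h -> sfmul f a%:P h = sfmul f h a%:P.

Definition sk_unit (g : {poly D}) : Prop :=
  exists h, skmul g h = 1 /\ skmul h g = 1.

Definition sk_irreducible (f : {poly D}) : Prop :=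
  ~ sk_unit f /\
  ~ (exists g h, f = skmul g h /\ (size g < size f)%N /\ (size h < size f)%N).

Definition bij_on (P : {poly D} -> Prop) (F : {poly D} -> {poly D}) : Prop :=
  (forall x, P x -> P (F x)) /\
  (forall x y, P x -> P y -> F x = F y -> x = y) /\
  (forall y, P y -> exists x, P x /\ F x = y).

Definition no_zero_divisors (f : {poly D}) : Prop :=
  forall g h, inSf f g -> inSf f h -> sfmul f g h = 0 -> g = 0 \/ h = 0.

Definition right_division (f : {poly D}) : Prop :=
  forall a, inSf f a -> a != 0 -> bij_on (inSf f) (fun x => sfmul f x a).

Definition left_division (f : {poly D}) : Prop :=
  forall a, inSf f a -> a != 0 -> bij_on (inSf f) (fun x => sfmul f a x).

(* S_f is infinite-dimensional over S_0 (scalar action a.x = a o x):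
   no finite family of elements of S_f spans S_f over S_0 *)
Definition infinite_dim_over_S0 (f : {poly D}) : Prop :=
  forall (n : nat) (s : 'I_n -> {poly D}), (forall i, inSf f (s i)) ->
    exists x, inSf f x /\
      forall c : 'I_n -> D, (forall i, inS0 f (c i)) ->
        x <> \sum_(i < n) sfmul f (c i)%:P (s i).

End Skew.

(* Main.v *)
Require Import Defs.
From HB Require Import structures.
From mathcomp Require Import all_boot all_order all_algebra.
From mathcomp Require Import zify.
From Stdlib Require Import Classical ClassicalEpsilon.
Set Implicit Arguments. Unset Strict Implicit. Unset Printing Implicit Defensive.
Import GRing.Theory.
Local Open Scope ring_scope.

Ltac szlia := repeat match goal with H : context [size _] |- _ => revert H end;
  repeat match goal with |- context [size ?p] => let n := fresh "n" in move: (size p) => n end;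
  intros; lia.

Section Sk.
Variable D : unitRingType.
Variable sigma : {rmorphism D -> D}.
Local Notation sgi i := (iter i (fun x => sigma x)).
Local Notation skm := (skmul sigma).

Lemma it0 i : sgi i 0 = 0.
Proof. by elim: i => //= i ->; rewrite rmorph0. Qed.
Lemma it1 i : sgi i 1 = 1.
Proof. by elim: i => //= i ->; rewrite rmorph1. Qed.
Lemma itD i a b : sgi i (a + b) = sgi i a + sgi i b.
Proof. by elim: i => //= i ->; rewrite rmorphD. Qed.
Lemma itN i a : sgi i (- a) = - sgi i a.
Proof. by elim: i => //= i ->; rewrite rmorphN. Qed.
Lemma itM i a b : sgi i (a * b) = sgi i a * sgi i b.
Proof. by elim: i => //= i ->; rewrite rmorphM. Qed.
Lemma itS i a : sgi i.+1 a = sgi i (sigma a).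
Proof. by elim: i => //= i <-. Qed.
Lemma itadd i j a : sgi (i + j) a = sgi i (sgi j a).
Proof. by rewrite iterD. Qed.

Lemma coef_skmul g h k :
  (skm g h)`_k = \sum_(i < k.+1) g`_i * sgi i h`_(k - i).
Proof.
rewrite /skmul coef_poly; case: ifP => // /negbT; rewrite -leqNgt => hk.
symmetry; apply: big1 => i _.
case: (ltnP i (size g)) => hi.
  have hs : (size h <= k - i)%N by lia.
  by rewrite (nth_default 0 hs) it0 mulr0.
by rewrite nth_default // mul0r.
Qed.

Lemma skmul0l h : skm 0 h = 0.
Proof. by apply/polyP => k; rewrite coef_skmul coef0 big1 // => i _; rewrite coef0 mul0r. Qed.
Lemma skmul0r g : skm g 0 = 0.
Proof. by apply/polyP => k; rewrite coef_skmul coef0 big1 // => i _; rewrite coef0 it0 mulr0. Qed.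

Lemma skmulDl g g' h : skm (g + g') h = skm g h + skm g' h.
Proof.
apply/polyP => k; rewrite coefD !coef_skmul -big_split /=.
by apply: eq_bigr => i _; rewrite coefD mulrDl.
Qed.
Lemma skmulDr g h h' : skm g (h + h') = skm g h + skm g h'.
Proof.
apply/polyP => k; rewrite coefD !coef_skmul -big_split /=.
by apply: eq_bigr => i _; rewrite coefD itD mulrDr.
Qed.
Lemma skmulZl c g h : skm (c *: g) h = c *: skm g h.
Proof.
apply/polyP => k; rewrite coefZ !coef_skmul mulr_sumr.
by apply: eq_bigr => i _; rewrite coefZ mulrA.
Qed.
Lemma skmulNl g h : skm (- g) h = - skm g h.
Proof. by rewrite -scaleN1r skmulZl scaleN1r. Qed.
Lemma skmulBl g g' h : skm (g - g') h = skm g h - skm g' h.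
Proof. by rewrite skmulDl skmulNl. Qed.
Lemma skmulNr g h : skm g (- h) = - skm g h.
Proof. by apply: (addrI (skm g h)); rewrite -skmulDr !subrr skmul0r. Qed.
Lemma skmulBr g h h' : skm g (h - h') = skm g h - skm g h'.
Proof. by rewrite skmulDr skmulNr. Qed.

Lemma skmul_suml I (r : seq I) (F : I -> {poly D}) h :
  skm (\sum_(i <- r) F i) h = \sum_(i <- r) skm (F i) h.
Proof.
elim: r => [|a r IH]; first by rewrite !big_nil skmul0l.
by rewrite !big_cons skmulDl IH.
Qed.
Lemma skmul_sumr I (r : seq I) (F : I -> {poly D}) g :
  skm g (\sum_(i <- r) F i) = \sum_(i <- r) skm g (F i).
Proof.
elim: r => [|a r IH]; first by rewrite !big_nil skmul0r.
by rewrite !big_cons skmulDr IH.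
Qed.

Lemma coef_skmulXl c k h n :
  (skm (c *: 'X^k) h)`_n = if (k <= n)%N then c * sgi k h`_(n - k) else 0.
Proof.
rewrite coef_skmul; case: leqP => hk.
  rewrite (bigD1 (Ordinal (hk : (k < n.+1)%N))) //= big1 ?addr0.
    by rewrite coefZ coefXn eqxx mulr1.
  move=> i /eqP hi; rewrite coefZ coefXn.
  have -> : (i == k :> nat) = false by apply/eqP => e; apply: hi; apply: val_inj.
  by rewrite mulr0 mul0r.
apply: big1 => i _; rewrite coefZ coefXn.
have -> : (i == k :> nat) = false by apply/eqP => e; have := ltn_ord i; lia.
by rewrite mulr0 mul0r.
Qed.

Lemma coef_skmulXr c k g n :
  (skm g (c *: 'X^k))`_n = if (k <= n)%N then g`_(n - k) * sgi (n - k) c else 0.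
Proof.
rewrite coef_skmul; case: leqP => hk.
  have hi : (n - k < n.+1)%N by lia.
  rewrite (bigD1 (Ordinal hi)) //= big1 ?addr0.
    by rewrite coefZ coefXn subKn // eqxx mulr1.
  move=> i /eqP hi'; rewrite coefZ coefXn.
  have -> : (n - i == k)%N = false.
    by apply/eqP => e; apply: hi'; apply: val_inj => /=; have := ltn_ord i; lia.
  by rewrite mulr0 it0 mulr0.
apply: big1 => i _; rewrite coefZ coefXn.
have -> : (n - i == k)%N = false by apply/eqP => e; have := ltn_ord i; lia.
by rewrite mulr0 it0 mulr0.
Qed.

Lemma skmul_mono a i b j :
  skm (a *: 'X^i) (b *: 'X^j) = (a * sgi i b) *: 'X^(i + j).
Proof.
apply/polyP => n; rewrite coef_skmulXl coefZ coefXn.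
case: leqP => h.
  rewrite coefZ coefXn.
  have [e|e] := boolP (n == (i + j)%N).
    have -> : (n - i == j)%N by apply/eqP; move/eqP: e; lia.
    by rewrite !mulr1.
  have -> : (n - i == j)%N = false by apply/eqP; move/eqP: e; lia.
  by rewrite !mulr0 it0 mulr0.
rewrite coefZ coefXn.
have -> : (n == i + j)%N = false by apply/eqP; lia.
by rewrite mulr0.
Qed.

Lemma poly_expand (p : {poly D}) : p = \sum_(i < size p) p`_i *: 'X^i.
Proof. by rewrite -poly_def coefK. Qed.

Lemma skmA3 a i b j c l :
  skm (skm (a *: 'X^i) (b *: 'X^j)) (c *: 'X^l) =
  skm (a *: 'X^i) (skm (b *: 'X^j) (c *: 'X^l)).
Proof.
by rewrite !skmul_mono itM -itadd mulrA addnA.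
Qed.

Lemma skmA2 a i b j (C : {poly D}) :
  skm (skm (a *: 'X^i) (b *: 'X^j)) C = skm (a *: 'X^i) (skm (b *: 'X^j) C).
Proof.
rewrite (poly_expand C) !skmul_sumr; apply: eq_bigr => l _; exact: skmA3.
Qed.

Lemma skmA1 a i (B C : {poly D}) :
  skm (skm (a *: 'X^i) B) C = skm (a *: 'X^i) (skm B C).
Proof.
rewrite (poly_expand B) skmul_sumr skmul_suml skmul_suml skmul_sumr.
apply: eq_bigr => j _; exact: skmA2.
Qed.

Lemma skmulA (a b c : {poly D}) : skm (skm a b) c = skm a (skm b c).
Proof.
rewrite (poly_expand a) !skmul_suml; apply: eq_bigr => i _; exact: skmA1.
Qed.

End Sk.


Lemma zmod_aux (V : zmodType) (a b c d : V) : a = b + c - d -> a - b = c - d.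
Proof. by move=> ->; rewrite addrAC [b + c]addrC addrK. Qed.

Section Sk2.
Variable D : unitRingType.
Hypothesis hD : forall x : D, x != 0 -> x \is a GRing.unit.
Variable sigma : {rmorphism D -> D}.
Local Notation sgi i := (iter i (fun x => sigma x)).
Local Notation skm := (skmul sigma).

Lemma mulf_neq0D (a b : D) : a != 0 -> b != 0 -> a * b != 0.
Proof.
move=> ha hb; apply/eqP => e; move/eqP: hb; apply.
by rewrite -(mulKr (hD ha) b) e mulr0.
Qed.

Lemma sig_neq0 (a : D) : a != 0 -> sigma a != 0.
Proof.
move=> ha; apply/eqP => e.
have := rmorphM sigma a a^-1; rewrite mulrV ?hD // rmorph1 e mul0r.
by move/eqP; rewrite oner_eq0.
Qed.

Lemma it_neq0 i (a : D) : a != 0 -> sgi i a != 0.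
Proof. by elim: i => //= i IH ha; apply: sig_neq0; apply: IH. Qed.

Lemma sig_inj : injective sigma.
Proof.
move=> x y e; apply/eqP; rewrite -subr_eq0; apply/negPn/negP => /sig_neq0.
by rewrite rmorphB e subrr eqxx.
Qed.

Lemma size_skmul (g h : {poly D}) : g != 0 -> h != 0 ->
  size (skm g h) = (size g + size h).-1.
Proof.
move=> g0 h0; apply/eqP; rewrite eqn_leq size_poly /=.
have sg : (0 < size g)%N by rewrite size_poly_gt0.
have sh : (0 < size h)%N by rewrite size_poly_gt0.
set K := (size g + size h).-2.
have eK : K = (size g + size h).-2 by [].
clearbody K.
have hK : (skm g h)`_K != 0.
  rewrite coef_skmul.
  have hi : ((size g).-1 < K.+1)%N by szlia.
  rewrite (bigD1 (Ordinal hi)) //= big1 ?addr0.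
    have -> : (K - (size g).-1)%N = (size h).-1 by szlia.
    apply: mulf_neq0D; first by rewrite -lead_coefE lead_coef_eq0.
    by apply: it_neq0; rewrite -lead_coefE lead_coef_eq0.
  move=> i /eqP hi'; have hi2 : (i : nat) <> (size g).-1.
    by move=> e; apply: hi'; apply: val_inj.
  case: (ltnP i (size g).-1) => hl.
    have hs : (size h <= K - i)%N by szlia.
    by rewrite (nth_default 0 hs) it0 mulr0.
  have hs : (size g <= i)%N by szlia.
  by rewrite (nth_default 0 hs) mul0r.
have : (K < size (skm g h))%N.
  by rewrite ltnNge; apply/negP => /(nth_default 0) e; move: hK; rewrite e eqxx.
move=> hlt; apply: leq_trans hlt; move: eK sg sh; move: (size g) (size h) => x y; szlia.
Qed.

Lemma skmul_eq0 (g h : {poly D}) : g != 0 -> h != 0 -> skm g h != 0.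
Proof.
move=> g0 h0; rewrite -size_poly_gt0 size_skmul //.
move: g0 h0; rewrite -!size_poly_gt0; szlia.
Qed.

Lemma size_skmul_ge (q d : {poly D}) : q != 0 -> d != 0 -> (size d <= size (skm q d))%N.
Proof.
move=> q0 d0; rewrite size_skmul //; move: q0; rewrite -size_poly_gt0; szlia.
Qed.

Lemma size_step (a d : {poly D}) (c : D) :
  (0 < size d)%N -> (size d <= size a)%N ->
  c * sgi (size a - size d)%N (lead_coef d) = lead_coef a ->
  (size (a - skm (c *: 'X^(size a - size d)) d)%R < size a)%N.
Proof.
move=> d0 da hc.
have a0 : (0 < size a)%N by szlia.
suff : (size (a - skm (c *: 'X^(size a - size d)) d)%R <= (size a).-1)%N by szlia.
apply/leq_sizeP => j hj; rewrite coefB coef_skmulXl.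
have -> : (size a - size d <= j)%N by szlia.
case: (ltngtP j (size a).-1) => hj'; first by szlia.
  rewrite (nth_default 0 (_ : size a <= j)%N); last by szlia.
  rewrite (nth_default 0 (_ : size d <= j - (size a - size d)%N)%N); last by szlia.
  by rewrite it0 mulr0 subrr.
rewrite hj' -lead_coefE.
have -> : ((size a).-1 - (size a - size d)%N)%N = (size d).-1 by szlia.
by rewrite -lead_coefE hc subrr.
Qed.

Lemma skdiv (d : {poly D}) : d != 0 -> forall a : {poly D},
  exists q r, a = skm q d + r /\ (size r < size d)%N.
Proof.
move=> d0 a; have [n] := ubnP (size a); elim: n a => // n IH a ha.
case: (ltnP (size a) (size d)) => hs.
  by exists 0, a; rewrite skmul0l add0r.
have hd : (0 < size d)%N by rewrite size_poly_gt0.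
have ld : lead_coef d != 0 by rewrite lead_coef_eq0.
set k := (size a - size d)%N.
set c := lead_coef a * (sgi k (lead_coef d))^-1.
have hc : c * sgi k (lead_coef d) = lead_coef a.
  by rewrite /c mulrVK // hD // it_neq0.
have := size_step hd hs hc; rewrite -/k => hlt.
have [q [r [e hr]]] := IH _ (leq_trans hlt (ltnSE ha)).
exists (c *: 'X^k + q), r; split => //.
by rewrite skmulDl -addrA -e addrC subrK.
Qed.

Variable f : {poly D}.
Hypothesis hmon : lead_coef f = 1.
Hypothesis hf0 : (0 < size f)%N.

Lemma skrem_fuel_spec n (g : {poly D}) : (size g <= n)%N ->
  exists q, g = skm q f + skrem_fuel sigma f n g /\
            (size (skrem_fuel sigma f n g) < size f)%N.
Proof.
elim: n g => [|n IH] g hg /=.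
  by exists 0; rewrite skmul0l add0r; split => //; szlia.
case: ifP => hs; first by exists 0; rewrite skmul0l add0r.
move/negbT: hs; rewrite -leqNgt => hs.
have hc : lead_coef g * sgi (size g - size f)%N (lead_coef f) = lead_coef g.
  by rewrite hmon it1 mulr1.
have := size_step hf0 hs hc => hlt.
have [q [e hr]] := IH _ (leq_trans hlt hg).
exists (skmonom (lead_coef g) (size g - size f)%N + q); split => //.
by rewrite skmulDl -addrA -e /skmonom addrC subrK.
Qed.

Lemma skrem_spec (g : {poly D}) :
  exists q, g = skm q f + skrem sigma f g /\ (size (skrem sigma f g) < size f)%N.
Proof. exact: skrem_fuel_spec. Qed.

Lemma skrem_size (g : {poly D}) : (size (skrem sigma f g) < size f)%N.
Proof. by have [q []] := skrem_spec g. Qed.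

Lemma skmul_small (q : {poly D}) : (size (skm q f) < size f)%N -> q = 0.
Proof.
move=> h; apply/eqP/negPn/negP => q0.
have f0 : f != 0 by rewrite -size_poly_gt0.
by have := size_skmul_ge q0 f0; szlia.
Qed.

Lemma skrem_uniq (g q r : {poly D}) :
  g = skm q f + r -> (size r < size f)%N -> skrem sigma f g = r.
Proof.
move=> e hr; have [q' [e' hr']] := skrem_spec g.
have : skm (q - q') f = skrem sigma f g - r.
  have E : skm q f = skm q' f + skrem sigma f g - r by rewrite -e' e addrK.
  by rewrite skmulBl; apply: zmod_aux.
move=> E.
have : (size (skm (q - q') f) < size f)%N.
  rewrite E; apply: leq_ltn_trans (size_polyD _ _) _; rewrite size_polyN; szlia.
move/skmul_small => e2; move: E; rewrite e2 skmul0l => /eqP.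
by rewrite eq_sym subr_eq0 => /eqP.
Qed.

Lemma skrem_small (g : {poly D}) : (size g < size f)%N -> skrem sigma f g = g.
Proof. by move=> h; apply: (@skrem_uniq g 0) => //; rewrite skmul0l add0r. Qed.

Lemma skrem_lin (a : D) (x y : {poly D}) :
  skrem sigma f (a *: x + y) = a *: skrem sigma f x + skrem sigma f y.
Proof.
have [q [e _]] := skrem_spec x; have [q' [e' _]] := skrem_spec y.
apply: (@skrem_uniq _ (a *: q + q')).
  rewrite skmulDl skmulZl {1}e {1}e' scalerDr.
  by rewrite -!addrA; congr (_ + _); rewrite addrC -!addrA; congr (_ + _); rewrite addrC.
apply: leq_ltn_trans (size_polyD _ _) _.
have := skrem_size x; have := skrem_size y; have := size_scale_leq a (skrem sigma f x).
szlia.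
Qed.

End Sk2.


Lemma size_le_pred (R : nzRingType) (p : {poly R}) n :
  (size p <= n.+1)%N -> p`_n = 0 -> (size p <= n)%N.
Proof.
move=> hs hn; apply/leq_sizeP => j hj.
case: (ltngtP j n) => h; first by szlia.
  by apply: nth_default; szlia.
by rewrite h.
Qed.

Section Lin.
Variable D : unitRingType.
Hypothesis hD : forall x : D, x != 0 -> x \is a GRing.unit.
Variable P : D -> Prop.
Hypothesis P0 : P 0.
Hypothesis P1 : P 1.
Hypothesis PD : forall x y, P x -> P y -> P (x + y).
Hypothesis PN : forall x, P x -> P (- x).
Hypothesis PM : forall x y, P x -> P y -> P (x * y).
Hypothesis PV : forall x, P x -> P x^-1.

Lemma P_sum I (r : seq I) (F : I -> D) : (forall i, P (F i)) -> P (\sum_(i <- r) F i).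
Proof. move=> h; elim: r => [|a r IH]; by rewrite ?big_nil ?big_cons //; apply: PD. Qed.

Lemma lin_dep n (p : 'I_n.+1 -> {poly D}) :
  (forall i, (size (p i) <= n)%N) -> (forall i j, P (p i)`_j) ->
  exists lam : 'I_n.+1 -> D, (forall i, P (lam i)) /\ (exists i, lam i != 0) /\
     \sum_i lam i *: p i = 0.
Proof.
elim: n p => [|n IH] p hs hP.
  exists (fun _ => 1); split => //; split; first by exists ord0; rewrite oner_neq0.
  apply: big1 => i _; have := hs i; rewrite leqn0 size_poly_eq0 => /eqP ->.
  by rewrite scaler0.
pose k := odflt ord_max [pick i | (p i)`_n != 0].
pose a := (p k)`_n.
have hk : forall i, (p i)`_n != 0 -> a != 0.
  rewrite /a /k; case: pickP => [k' hk' | hn] //= i hi.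
  by move: (hn i); rewrite hi.
pose c j := (p (lift k j))`_n.
pose w j := p (lift k j) - (c j * a^-1) *: p k.
have wn : forall j, (w j)`_n = 0.
  move=> j; rewrite /w coefB coefZ -/a -/(c j).
  have [a0|a0] := eqVneq a 0.
    have : c j = 0 by apply/eqP/negPn/negP => /hk; rewrite a0 eqxx.
    by move=> ->; rewrite mul0r mul0r subrr.
  by rewrite mulrVK ?hD // subrr.
have ws : forall j, (size (w j) <= n)%N.
  move=> j; apply: size_le_pred (wn j).
  apply: leq_trans (size_polyD _ _) _; rewrite size_polyN.
  have := size_scale_leq (c j * a^-1) (p k); have := hs k; have := hs (lift k j).
  szlia.
have wP : forall j l, P (w j)`_l.
  move=> j l; rewrite /w coefB coefZ; apply: PD; first exact: hP.
  by apply: PN; apply: PM; [apply: PM; [apply: hP | apply: PV; apply: hP] | apply: hP].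
have [mu [muP [[j0 hj0] hsum]]] := IH w ws wP.
pose S := \sum_j mu j * (c j * a^-1).
exists (fun i => if unlift k i is Some j then mu j else - S); split.
  move=> i; case: unlift => [j|] //; apply: PN; apply: P_sum => j.
  by apply: PM; [apply: muP | apply: PM; [apply: hP | apply: PV; apply: hP]].
split; first by exists (lift k j0); rewrite liftK.
rewrite (bigD1_ord k) //= unlift_none.
under eq_bigr do rewrite liftK.
transitivity (\sum_i mu i *: w i); last exact: hsum.
rewrite /w.
under [in RHS]eq_bigr do rewrite scalerBr scalerA.
rewrite sumrB -scaler_suml scaleNr addrC.
by [].
Qed.

End Lin.

Section LinMap.
Variable D : unitRingType.
Hypothesis hD : forall x : D, x != 0 -> x \is a GRing.unit.
Variable Phi : {poly D} -> {poly D}.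
Hypothesis hlin : forall a x y, Phi (a *: x + y) = a *: Phi x + Phi y.

Lemma Phi0 : Phi 0 = 0.
Proof.
have h := hlin 1 0 0; rewrite scaler0 addr0 scale1r in h.
by apply: (@addrI _ (Phi 0)); rewrite addr0 -h.
Qed.

Lemma PhiZ a x : Phi (a *: x) = a *: Phi x.
Proof. by rewrite -[a *: x]addr0 hlin Phi0 addr0. Qed.

Lemma PhiD x y : Phi (x + y) = Phi x + Phi y.
Proof. by have := hlin 1 x y; rewrite !scale1r. Qed.

Lemma Phi_sum I (r : seq I) (lam : I -> D) (x : I -> {poly D}) :
  Phi (\sum_(i <- r) lam i *: x i) = \sum_(i <- r) lam i *: Phi (x i).
Proof.
elim: r => [|a r IH]; first by rewrite !big_nil Phi0.
by rewrite !big_cons hlin IH.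
Qed.

End LinMap.

Lemma sumX_coef (D : nzRingType) k (lam : 'I_k -> D) (j0 : 'I_k) :
  (\sum_(j < k) lam j *: 'X^j)`_j0 = lam j0.
Proof.
rewrite coef_sum (bigD1 j0) //= coefZ coefXn eqxx mulr1 big1 ?addr0 //.
move=> j hj; rewrite coefZ coefXn.
have -> : (j0 == j :> nat) = false.
  by apply/negbTE; apply: contra hj => /eqP e; apply/eqP/val_inj.
by rewrite mulr0.
Qed.

Lemma sumX_size (D : nzRingType) k (lam : 'I_k -> D) :
  (size (\sum_(j < k) lam j *: 'X^j)%R <= k)%N.
Proof.
apply/leq_sizeP => i hi; rewrite coef_sum big1 // => j _.
rewrite coefZ coefXn.
have -> : (i == j :> nat) = false by apply/eqP; have := ltn_ord j; lia.
by rewrite mulr0.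
Qed.


Section LinMap2.
Variable D : unitRingType.
Hypothesis hD : forall x : D, x != 0 -> x \is a GRing.unit.

Lemma lin_depT n (p : 'I_n.+1 -> {poly D}) :
  (forall i, (size (p i) <= n)%N) ->
  exists lam : 'I_n.+1 -> D, (exists i, lam i != 0) /\ \sum_i lam i *: p i = 0.
Proof.
move=> hs; have [lam [_ [h1 h2]]] := @lin_dep D hD (fun _ => True) I I
  (fun _ _ _ _ => I) (fun _ _ => I) (fun _ _ _ _ => I) (fun _ _ => I) n p hs (fun _ _ => I).
by exists lam.
Qed.

Variable Phi : {poly D} -> {poly D}.
Hypothesis hlin : forall a x y, Phi (a *: x + y) = a *: Phi x + Phi y.

Lemma inj_surj n :
  (forall x : {poly D}, (size x <= n)%N -> (size (Phi x) <= n)%N) ->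
  (forall x : {poly D}, (size x <= n)%N -> Phi x = 0 -> x = 0) ->
  forall y : {poly D}, (size y <= n)%N -> exists x : {poly D}, (size x <= n)%N /\ Phi x = y.
Proof.
move=> hmap hinj y hy; apply: NNPP => hno.
pose p (j : 'I_n.+1) := if (j < n)%N then Phi 'X^j else y.
have hs : forall j, (size (p j) <= n)%N.
  move=> j; rewrite /p; case: ifP => // hj; apply: hmap; rewrite size_polyXn; lia.
have [lam [[i0 hi0] hsum]] := lin_depT hs.
rewrite big_ord_recr /= {2}/p ltnn /= in hsum.
pose u := \sum_(j < n) lam (widen_ord (leqnSn n) j) *: 'X^j.
have hu : Phi u + lam ord_max *: y = 0.
  rewrite -hsum /u (Phi_sum hlin); congr (_ + _); apply: eq_bigr => j _.
  by rewrite /p /= ltn_ord.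
have [l0|l0] := eqVneq (lam ord_max) 0.
  move: hu; rewrite l0 scale0r addr0 => /hinj hu.
  have u0 : u = 0 by apply: hu; apply: sumX_size.
  have : lam i0 = 0.
    case: (ltnP i0 n) => hi.
      have -> : i0 = widen_ord (leqnSn n) (Ordinal hi) by apply: val_inj.
      by rewrite -(sumX_coef (fun j : 'I_n => lam (widen_ord (leqnSn n) j)) (Ordinal hi)) -/u u0 coef0.
    have -> : i0 = ord_max by apply: val_inj => /=; have := ltn_ord i0; lia.
    exact: l0.
  by move/eqP: hi0 => hi0 /hi0.
apply: hno; exists (- (lam ord_max)^-1 *: u); split.
  apply: leq_trans (size_scale_leq _ _) _; exact: sumX_size.
rewrite (PhiZ hlin).
have -> : Phi u = - (lam ord_max *: y) by apply/eqP; rewrite -addr_eq0 hu.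
by rewrite scalerN scaleNr opprK scalerA mulVr ?hD // scale1r.
Qed.

Lemma not_surj k n : (k < n)%N ->
  exists y : {poly D}, (size y <= n)%N /\ forall x : {poly D}, (size x <= k)%N -> Phi x <> y.
Proof.
move=> hkn; apply: NNPP => hno.
have H : forall j : 'I_k.+1, exists x : {poly D}, (size x <= k)%N && (Phi x == 'X^j).
  move=> j; apply: NNPP => hj; apply: hno; exists 'X^j; split.
    by rewrite size_polyXn; have := ltn_ord j; lia.
  move=> x hx e; apply: hj; exists x; by rewrite hx e eqxx.
pose p j := xchoose (H j).
have hp : forall j, ((size (p j) <= k)%N && (Phi (p j) == 'X^j)) := fun j => xchooseP (H j).
have [lam [[i0 hi0] hsum]] := @lin_depT k p (fun j => proj1 (andP (hp j))).
have := congr1 Phi hsum; rewrite (Phi_sum hlin) (Phi0 hlin).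
under eq_bigr do rewrite (eqP (proj2 (andP (hp _)))).
move=> e0; have := congr1 (fun q : {poly D} => q`_i0) e0.
rewrite /= sumX_coef coef0 => e.
by move: hi0; rewrite e eqxx.
Qed.

End LinMap2.

Section Span.
Variable D : unitRingType.
Hypothesis hD : forall x : D, x != 0 -> x \is a GRing.unit.
Variable sigma : {rmorphism D -> D}.

Definition Kp (c : D) := (forall d, c * d = d * c) /\ sigma c = c.

Lemma K0 : Kp 0. Proof. by split; [move=> d; rewrite mul0r mulr0 | rewrite rmorph0]. Qed.
Lemma K1 : Kp 1. Proof. by split; [move=> d; rewrite mul1r mulr1 | rewrite rmorph1]. Qed.
Lemma KD x y : Kp x -> Kp y -> Kp (x + y).
Proof. by move=> [hx sx] [hy sy]; split; [move=> d; rewrite mulrDl mulrDr hx hy | rewrite rmorphD sx sy]. Qed.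
Lemma KN x : Kp x -> Kp (- x).
Proof. by move=> [hx sx]; split; [move=> d; rewrite mulNr mulrN hx | rewrite rmorphN sx]. Qed.
Lemma KM x y : Kp x -> Kp y -> Kp (x * y).
Proof. by move=> [hx sx] [hy sy]; split; [move=> d; rewrite -mulrA hy mulrA hx mulrA | rewrite rmorphM sx sy]. Qed.
Lemma KV x : Kp x -> Kp x^-1.
Proof.
move=> [hx sx]; have [->|x0] := eqVneq x 0; first by rewrite invr0; exact: K0.
have ux := hD x0; split; last by rewrite rmorphV // sx.
move=> d; transitivity (x^-1 * (x * d) * x^-1); last by rewrite mulKr.
by rewrite hx mulrA mulrK.
Qed.

Definition ev n (e : 'I_n -> D) (p : {poly D}) := \sum_(i < n) p`_i * e i.

Lemma ev_sum n (e : 'I_n -> D) I (r : seq I) (lam : I -> D) (p : I -> {poly D}) :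
  ev e (\sum_(j <- r) lam j *: p j) = \sum_(j <- r) lam j * ev e (p j).
Proof.
elim: r => [|a r IH].
  by rewrite !big_nil /ev big1 // => i _; rewrite coef0 mul0r.
rewrite !big_cons -IH /ev mulr_sumr -big_split /=.
by apply: eq_bigr => i _; rewrite coefD coefZ mulrDl mulrA.
Qed.

Lemma span_surj n (e : 'I_n -> D) :
  (forall d, exists c : 'I_n -> D, (forall i, Kp (c i)) /\ d = \sum_i c i * e i) ->
  forall y, exists x, sigma x = y.
Proof.
elim: n e => [|n IH] e hspan.
  have [c [_ e1]] := hspan 1; move: e1; rewrite big_ord0 => /eqP.
  by rewrite oner_eq0.
move=> y.
pose coord z := proj1_sig (constructive_indefinite_description _ (hspan z)).
have coordP : forall z, (forall i, Kp (coord z i)) /\ z = \sum_i coord z i * e i.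
  move=> z; exact: (proj2_sig (constructive_indefinite_description _ (hspan z))).
pose vec z := \poly_(i < n.+1) coord z (inord i).
have vecs : forall z, (size (vec z) <= n.+1)%N by move=> z; apply: size_poly.
have vecK : forall z i, Kp (vec z)`_i.
  by move=> z i; rewrite coef_poly; case: ifP => _; [apply: (coordP z).1 | exact: K0].
have evvec : forall z, ev e (vec z) = z.
  move=> z; rewrite {2}(coordP z).2 /ev; apply: eq_bigr => i _.
  by rewrite coef_poly ltn_ord inord_val.
pose p (j : 'I_n.+2) := if (j < n.+1)%N then vec (sigma (e (inord j))) else vec y.
have ps : forall j, (size (p j) <= n.+1)%N by move=> j; rewrite /p; case: ifP.
have pK : forall j i, Kp (p j)`_i by move=> j i; rewrite /p; case: ifP.
have [lam [lamK [[j0 hj0] hsum]]] :=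
  lin_dep hD K0 K1 KD KN KM KV ps pK.
have := congr1 (ev e) hsum; rewrite ev_sum big_ord_recr /= {2}/p ltnn evvec.
have -> : ev e 0 = 0 by rewrite /ev big1 // => i _; rewrite coef0 mul0r.
under eq_bigr do rewrite /p /= ltn_ord evvec.
set lm := lam ord_max => hrel.
have sigK : forall c x, Kp c -> sigma (c * x) = c * sigma x.
  by move=> c x [_ sc]; rewrite rmorphM sc.
have [l0|l0] := eqVneq lm 0.
  move: hrel; rewrite l0 mul0r addr0.
  under eq_bigr do rewrite inord_val -sigK //.
  rewrite -rmorph_sum => hs0.
  have hs1 : \sum_(i < n.+1) lam (widen_ord (leqnSn n.+1) i) * e i = 0.
    by apply: (sig_inj hD); rewrite rmorph0; exact: hs0.
  have [k hk] : exists k : 'I_n.+1, lam (widen_ord (leqnSn n.+1) k) != 0.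
    case: (ltnP j0 n.+1) => hj.
      by exists (Ordinal hj); move: hj0; congr (_ != _); congr lam; apply: val_inj.
    have ej : j0 = ord_max by apply: val_inj => /=; have := ltn_ord j0; lia.
    by move: hj0; rewrite ej -/lm l0 eqxx.
  pose lw i := lam (widen_ord (leqnSn n.+1) i).
  apply: (IH (fun j => e (lift k j))) => d.
  have [c [cK cd]] := hspan d.
  exists (fun j => c (lift k j) - c k * (lw k)^-1 * lw (lift k j)); split.
    move=> j; apply: KD; first exact: cK.
    by apply: KN; apply: KM; [apply: KM; [exact: cK | apply: KV; exact: lamK] | exact: lamK].
  move: hs1; rewrite (bigD1_ord k) //= => hs1.
  have ek : e k = - ((lw k)^-1 * \sum_(i < n) lw (lift k i) * e (lift k i)).
    move/eqP: hs1; rewrite addr_eq0 => /eqP h1.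
    by rewrite -mulrN -h1 mulKr // hD.
  rewrite cd (bigD1_ord k) //= ek.
  rewrite mulrN mulr_sumr mulr_sumr -sumrN -big_split /=.
  apply: eq_bigr => j _; rewrite mulrBl addrC.
  by rewrite !mulrA.
pose x := \sum_(i < n.+1) (- (lm^-1 * lam (widen_ord (leqnSn n.+1) i))) * e i.
have hK : forall i : 'I_n.+1, Kp (- (lm^-1 * lam (widen_ord (leqnSn n.+1) i))).
  by move=> i; apply: KN; apply: KM; [apply: KV; exact: lamK | exact: lamK].
exists x; rewrite /x rmorph_sum (eq_bigr _ (fun i _ => sigK _ _ (hK i))).
move: hrel; under eq_bigr do rewrite inord_val.
move/eqP; rewrite addr_eq0 => /eqP hrel.
under eq_bigr do rewrite mulNr -mulrA.
by rewrite sumrN -mulr_sumr hrel mulrN opprK mulKr // hD.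
Qed.

End Span.


Lemma zmod_aux2 (V : zmodType) (A B X : V) : - (A + B) + (A + X + B) = X.
Proof. by rewrite [A + X + B]addrAC addKr. Qed.

Section Main.
Variable D : unitRingType.
Hypothesis hD : forall x : D, x != 0 -> x \is a GRing.unit.
Variable sigma : {rmorphism D -> D}.
Local Notation sgi i := (iter i (fun x => sigma x)).
Local Notation skm := (skmul sigma).
Local Notation skr := (skrem sigma).

Lemma polyC_mono (c : D) : c%:P = c *: 'X^0.
Proof. by rewrite expr0 alg_polyC. Qed.

Lemma skmul_Cl (c : D) (p : {poly D}) : skm c%:P p = c *: p.
Proof.
by apply/polyP => n; rewrite polyC_mono coef_skmulXl coefZ /= subn0.
Qed.

Lemma skmul_1r (p : {poly D}) : skm p 1 = p.
Proof.
have -> : (1 : {poly D}) = 1 *: 'X^0 by rewrite expr0 scale1r.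
by apply/polyP => n; rewrite coef_skmulXr subn0 /= it1 mulr1.
Qed.

Lemma skmul_1l (p : {poly D}) : skm 1 p = p.
Proof. by rewrite -polyC1 skmul_Cl scale1r. Qed.

Lemma skmul_CC (a b : D) : skm a%:P b%:P = (a * b)%:P.
Proof. by rewrite skmul_Cl scale_polyC. Qed.

Variable f : {poly D}.
Variable m : nat.
Hypothesis hmon : lead_coef f = 1.
Hypothesis hsize : size f = m.+1.
Hypothesis hm : (2 <= m)%N.
Hypothesis hirr : sk_irreducible sigma f.

Lemma hf0 : (0 < size f)%N. Proof. by rewrite hsize. Qed.
Lemma f_neq0 : f != 0. Proof. by rewrite -size_poly_gt0 hf0. Qed.

Lemma Sspec x : exists q, x = skm q f + skr f x /\ (size (skr f x) < size f)%N.
Proof. apply: skrem_spec => //; exact: hf0. Qed.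
Lemma Ssize x : (size (skr f x) < size f)%N.
Proof. apply: skrem_size => //; exact: hf0. Qed.
Lemma Suniq (g q r : {poly D}) :
  g = skm q f + r -> (size r < size f)%N -> skr f g = r.
Proof. apply: skrem_uniq => //; exact: hf0. Qed.
Lemma Slin (a : D) (x y : {poly D}) :
  skr f (a *: x + y) = a *: skr f x + skr f y.
Proof. apply: skrem_lin => //; exact: hf0. Qed.

Lemma Ssmall (g : {poly D}) : (size g < size f)%N -> skr f g = g.
Proof. apply: skrem_small => //; exact: hf0. Qed.

Definition inRf (x : {poly D}) := exists q, x = skm q f.

Lemma skrem0P (x : {poly D}) : skr f x = 0 <-> inRf x.
Proof.
split.
  move=> e; have [q [hq _]] := Sspec x.
  by exists q; rewrite hq e addr0.
move=> [q ->]; apply: (@Suniq _ q); first by rewrite addr0.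
by rewrite size_poly0 hf0.
Qed.

Definition Phi (h x : {poly D}) := skr f (skm x h).

Lemma Phi_lin h a x y : Phi h (a *: x + y) = a *: Phi h x + Phi h y.
Proof. by rewrite /Phi skmulDl skmulZl Slin. Qed.

Definition inI (h z : {poly D}) := exists a b, z = skm a h + skm b f.

Lemma inI_sub h z e q : inI h z -> inI h e -> inI h (z - skm q e).
Proof.
move=> [a [b ->]] [a' [b' ->]]; exists (a - skm q a'), (b - skm q b').
rewrite skmulDr -!skmulA !skmulBl.
rewrite opprD addrACA //.
Qed.

Lemma inI_gen h : forall N (e : {poly D}), (size e < N)%N -> inI h e -> e != 0 ->
  exists e', [/\ inI h e', e' != 0 & forall z, inI h z -> exists u, z = skm u e'].
Proof.
elim=> [//|N IH] e hN he e0.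
case: (classic (exists r, [/\ inI h r, r != 0 & (size r < size e)%N])).
  move=> [r [hr r0 hs]]; apply: (IH r) => //; szlia.
move=> hno; exists e; split => // z hz.
have [q [r [hzr hr]]] := skdiv hD sigma e0 z.
exists q; have : r = z - skm q e by rewrite hzr addrC addKr.
move=> er; have [r0|r0] := eqVneq r 0; first by rewrite hzr r0 addr0.
exfalso; apply: hno; exists r; split => //; rewrite er; exact: inI_sub.
Qed.

Lemma minimal (h : {poly D}) : h != 0 -> (size h < size f)%N ->
  forall d, d != 0 -> inRf (skm d h) -> (size f <= size d)%N.
Proof.
move=> h0 hs d; have [N] := ubnP (size d); elim: N d => // N IH d hN d0 hd.
rewrite leqNgt; apply/negP => hdf.
have hmin : forall d' : {poly D}, (size d' < size d)%N -> d' != 0 -> ~ inRf (skm d' h).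
  move=> d' hd' d'0 hr; have := IH d' (leq_trans hd' (ltnSE hN)) d'0 hr; szlia.
have hk : ((size d).-1 < m)%N by move: hdf; rewrite hsize; szlia.
have [y [hy hny]] := not_surj hD (@Phi_lin h) hk.
have yI : ~ inI h y.
  move=> [a [b ey]].
  have [q [r [ea hr]]] := skdiv hD sigma d0 a.
  have [c ec] := hd.
  apply: (hny r); first by szlia.
  rewrite /Phi; apply: (@Suniq _ (- (skm q c + b))); last by rewrite hsize.
  rewrite ey ea skmulDl skmulA ec -skmulA skmulNl.
  by rewrite skmulDl zmod_aux2.
have fI : inI h f by exists 0, 1; rewrite skmul0l add0r skmul_1l.
have [e [eI e0 egen]] := inI_gen (ltnSn (size f)) fI f_neq0.
have se : (1 < size e)%N.
  rewrite ltnNge; apply/negP => se1.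
  have ec := size1_polyC se1; move: ec; set c0 := e`_0 => ec.
  apply: yI; have [a [b eab]] := eI.
  have c00 : c0 != 0 by apply: contra e0 => /eqP c00; rewrite ec c00 polyC0.
  exists (skm (skm y c0^-1%:P) a), (skm (skm y c0^-1%:P) b).
  rewrite [skm (skm _ a) h]skmulA [skm (skm _ b) f]skmulA -skmulDr -eab ec.
  by rewrite skmulA skmul_CC mulVr ?hD // polyC1 skmul_1r.
have [u eu] := egen f fI.
have hI : inI h h by exists 1, 0; rewrite skmul_1l skmul0l addr0.
have [v ev] := egen h hI.
have u0 : u != 0 by apply: contra f_neq0 => /eqP u0; rewrite eu u0 skmul0l.
have v0 : v != 0 by apply: contra h0 => /eqP v0; rewrite ev v0 skmul0l.
have := size_skmul hD sigma u0 e0; rewrite -eu => hfu.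
have := size_skmul hD sigma v0 e0; rewrite -ev => hhv.
have [_ hirr2] := hirr; apply: hirr2; exists u, e; split => //.
have : (0 < size u)%N by rewrite size_poly_gt0.
have : (0 < size v)%N by rewrite size_poly_gt0.
split; szlia.
Qed.

Lemma nzd : no_zero_divisors sigma f.
Proof.
move=> g h hg hh e.
have [g0|g0] := eqVneq g 0; first by left.
have [h0|h0] := eqVneq h 0; first by right.
have := minimal h0 hh g0 ((skrem0P _).1 e); rewrite /inSf in hg; szlia.
Qed.

Lemma PhiB h x y : Phi h (x - y) = Phi h x - Phi h y.
Proof. by rewrite addrC -scaleN1r Phi_lin scaleN1r addrC. Qed.

Lemma rdiv : right_division sigma f.
Proof.
move=> a ha a0; split; [|split].
- by move=> x _; apply: Ssize.
- move=> x y hx hy e.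
  have E : Phi a (x - y) = 0 by rewrite PhiB; apply/eqP; rewrite subr_eq0; apply/eqP.
  have hxy : inSf f (x - y).
    rewrite /inSf in hx hy *; apply: leq_ltn_trans (size_polyD _ _) _; rewrite size_polyN; szlia.
  case: (nzd hxy ha E) => [e0|e0]; last by move: a0; rewrite e0 eqxx.
  by move/eqP: e0; rewrite subr_eq0 => /eqP.
- move=> y hy.
  have hmap : forall x : {poly D}, (size x <= m)%N -> (size (Phi a x) <= m)%N.
    by move=> x _; have := Ssize (skm x a); rewrite hsize.
  have hinj : forall x : {poly D}, (size x <= m)%N -> Phi a x = 0 -> x = 0.
    move=> x hx e; have hx' : inSf f x by rewrite /inSf hsize.
    case: (nzd hx' ha e) => // e0; by move: a0; rewrite e0 eqxx.
  have hy' : (size y <= m)%N by move: hy; rewrite /inSf hsize.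
  have [x [hx ex]] := inj_surj hD (@Phi_lin a) hmap hinj hy'.
  by exists x; split => //; rewrite /inSf hsize.
Qed.

Lemma skmX (p : {poly D}) n : (skm 'X p)`_n = if (1 <= n)%N then sigma p`_(n.-1) else 0.
Proof.
have -> : ('X : {poly D}) = 1 *: 'X^1 by rewrite scale1r expr1.
by rewrite coef_skmulXl mul1r subn1.
Qed.

Lemma skmX_size (p : {poly D}) : (size (skm 'X p) <= (size p).+1)%N.
Proof.
apply/leq_sizeP => j hj; rewrite skmX; case: ifP => // _.
by rewrite nth_default ?rmorph0 //; szlia.
Qed.

Lemma S0K c : inS0 sigma f c -> Kp sigma c.
Proof.
move=> hc; split.
  move=> d; have hd : inSf f d%:P.
    by rewrite /inSf hsize; apply: leq_ltn_trans (size_polyC_leq1 _) _; szlia.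
  have := hc _ hd; rewrite /sfmul !skmul_CC !Ssmall.
  - by move/polyC_inj.
  - by apply: leq_ltn_trans (size_polyC_leq1 _) _; rewrite hsize; szlia.
  - by apply: leq_ltn_trans (size_polyC_leq1 _) _; rewrite hsize; szlia.
have hX : inSf f 'X by rewrite /inSf size_polyX hsize; szlia.
have := hc _ hX; rewrite /sfmul skmul_Cl !Ssmall.
- move/(congr1 (fun q : {poly D} => q`_1)); rewrite coefZ coefX skmX /= coefC /= mulr1.
  by move=> <-.
- apply: leq_ltn_trans (skmX_size _) _; rewrite hsize.
  have := size_polyC_leq1 c; szlia.
- by apply: leq_ltn_trans (size_scale_leq _ _) _; rewrite size_polyX hsize; szlia.
Qed.

Hypothesis hsig : ~ (forall y : D, exists x : D, sigma x = y).

Lemma infdim : infinite_dim_over_S0 sigma f.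
Proof.
move=> n s hs; apply: NNPP => hno.
have span : forall d : D, exists c : 'I_n -> D,
    (forall i, Kp sigma (c i)) /\ d = \sum_i c i * (s i)`_0.
  move=> d; apply: NNPP => hd; apply: hno; exists d%:P; split.
    by rewrite /inSf hsize; apply: leq_ltn_trans (size_polyC_leq1 _) _; szlia.
  move=> c hc e; apply: hd; exists c; split; first by move=> i; apply: S0K.
  have := congr1 (fun q : {poly D} => q`_0) e; rewrite /= coefC eqxx coef_sum => ->.
  apply: eq_bigr => i _; rewrite /sfmul skmul_Cl Ssmall ?coefZ //.
  apply: leq_ltn_trans (size_scale_leq _ _) _; exact: hs.
exact: hsig (span_surj hD span).
Qed.

Lemma not_ldiv : ~ left_division sigma f.
Proof.
move=> hl.
have hX : inSf f 'X by rewrite /inSf size_polyX hsize; szlia.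
have X0 : ('X : {poly D}) != 0 by rewrite -size_poly_gt0 size_polyX.
have [_ [_ hsurj]] := hl 'X hX X0.
have [b hb] : exists b : D, forall x, sigma x <> b.
  apply: NNPP => h; apply: hsig => y; apply: NNPP => hy; apply: h; exists y.
  by move=> x ex; apply: hy; exists x.
have hbX : inSf f (b *: 'X).
  by rewrite /inSf; apply: leq_ltn_trans (size_scale_leq _ _) _; rewrite size_polyX hsize; szlia.
have [x [hx ex]] := hsurj _ hbX.
have [q [eq _]] := Sspec (skm 'X x).
rewrite /sfmul in ex; rewrite ex in eq.
have [q0|q0] := eqVneq q 0.
  move: eq; rewrite q0 skmul0l add0r => /(congr1 (fun q : {poly D} => q`_1)).
  by rewrite skmX /= coefZ coefX /= mulr1 => /hb.
have sq : (size q <= 1)%N.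
  have : (size (skm q f) <= m.+1)%N.
    have -> : skm q f = skm 'X x - b *: 'X by rewrite eq addrK.
    apply: leq_trans (size_polyD _ _) _; rewrite size_polyN.
    have := skmX_size x; have := size_scale_leq b 'X; rewrite size_polyX.
    rewrite /inSf hsize in hx; szlia.
  rewrite size_skmul // ?f_neq0 // hsize; szlia.
have ec := size1_polyC sq; move: ec; set c := q`_0 => ec.
have c0 : c != 0 by apply: contra q0 => /eqP c0; rewrite ec c0 polyC0.
move: eq; rewrite ec skmul_Cl => /(congr1 (fun q : {poly D} => q`_0)).
rewrite skmX /= coefD !coefZ coefX /= mulr0 addr0 => /esym E0.
have f00 : f`_0 = 0 by rewrite -(mulKr (hD c0) (f`_0)) E0 mulr0.
have [_ hirr2] := hirr; apply: hirr2.
exists (\poly_(i < m) f`_i.+1), 'X; split; last first.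
  split; last by rewrite size_polyX hsize; szlia.
  by apply: leq_ltn_trans (size_poly _ _) _; rewrite hsize.
apply/polyP => n.
have -> : ('X : {poly D}) = 1 *: 'X^1 by rewrite scale1r expr1.
rewrite coef_skmulXr; case: n => [|n] /=; first by rewrite f00.
rewrite subn1 /= it1 mulr1 coef_poly; case: ifP => // hn.
by rewrite nth_default // hsize; szlia.
Qed.

End Main.


Theorem mainTheorem8 (D : unitRingType)
  (hD : forall x : D, x != 0 -> x \is a GRing.unit)
  (sigma : {rmorphism D -> D})
  (hsig : ~ (forall y : D, exists x : D, sigma x = y))
  (f : {poly D}) (m : nat)
  (hmon : lead_coef f = 1) (hsize : size f = m.+1) (hm : (2 <= m)%N)
  (hirr : sk_irreducible sigma f) :
  no_zero_divisors sigma f /\ right_division sigma f /\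
  ~ left_division sigma f /\ infinite_dim_over_S0 sigma f.
Proof.
split; first exact: (nzd hD hmon hsize hm hirr).
split; first exact: (rdiv hD hmon hsize hm hirr).
split; first exact: (not_ldiv hD hmon hsize hm hirr hsig).
exact: (infdim hD hmon hsize hm hsig).
Qed.
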